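(* Let $(X,d)$ be a sequentially right $K$-complete quasi-metric space and $\varphi:X\to\mathbb{R}\cup\{\infty\}$ a proper, bounded below, nearly lower semicontinuous function. For $x\in X$ let $S(x)=\{y\in X:\varphi(y)+d(y,x)\le\varphi(x)\}$. Suppose that for every $x\in X$ with $\varphi(x)>\inf\varphi(X)$ there exists $y\in S(x)$ with $\varphi(y)<\varphi(x)$. Then there exists $z\in X$ with $\varphi(z)=\inf\varphi(X)$.
   Context: A quasi-metric on $X$ is $d:X\times X\to[0,\infty)$ with $d(x,x)=0$, $d(x,z)\le d(x,y)+d(y,z)$, and $d(x,y)=d(y,x)=0\Rightarrow x=y$ (no symmetry). Topology $\tau_d$: neighbourhood base at $x$ given by $\{y:d(x,y)<r\}$, $r>0$; $x_n\to x$ iff $d(x,x_n)\to0$. A sequence $(x_n)$ is right $K$-Cauchy if for every $\varepsilon>0$ there is $n_\varepsilon$ with $d(x_{n+k},x_n)<\varepsilon$ for all $n\ge n_\varepsilon$, $k\in\mathbb{N}$; $X$ is sequentially right $K$-complete if every right $K$-Cauchy sequence converges. $\varphi$ is proper if finite somewhere; nearly lower semicontinuous if $\varphi(x)\le\liminf_n\varphi(x_n)$ for every sequence with pairwise distinct terms converging to $x$. *)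

(* Defs.v *)
From Stdlib Require Import Reals.
From Coquelicot Require Export Coquelicot.
Open Scope R_scope.

Definition is_quasi_metric {X : Type} (d : X -> X -> R) : Prop :=
  (forall x y, 0 <= d x y) /\
  (forall x, d x x = 0) /\
  (forall x y z, d x z <= d x y + d y z) /\
  (forall x y, d x y = 0 -> d y x = 0 -> x = y).

Definition qm_converges {X : Type} (d : X -> X -> R) (u : nat -> X) (x : X) : Prop :=
  forall eps, 0 < eps -> exists N, forall n, (N <= n)%nat -> d x (u n) < eps.

Definition right_K_Cauchy {X : Type} (d : X -> X -> R) (u : nat -> X) : Prop :=
  forall eps, 0 < eps -> exists N, forall n k, (N <= n)%nat -> (1 <= k)%nat ->
    d (u (n + k)%nat) (u n) < eps.

Definition seq_right_K_complete {X : Type} (d : X -> X -> R) : Prop :=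
  forall u : nat -> X, right_K_Cauchy d u -> exists x, qm_converges d u x.

Definition Rbar_liminf (u : nat -> Rbar) : Rbar :=
  Rbar_lub (fun v => exists n, v = Rbar_glb (fun w => exists k, (n <= k)%nat /\ w = u k)).

Definition nearly_lsc {X : Type} (d : X -> X -> R) (phi : X -> Rbar) : Prop :=
  forall (u : nat -> X) (x : X),
    (forall n m, n <> m -> u n <> u m) ->
    qm_converges d u x ->
    Rbar_le (phi x) (Rbar_liminf (fun n => phi (u n))).

Definition proper_fun {X : Type} (phi : X -> Rbar) : Prop :=
  exists x, phi x <> p_infty.

Definition bounded_below {X : Type} (phi : X -> Rbar) : Prop :=
  exists m : R, forall x, Rbar_le (Finite m) (phi x).

Definition inf_image {X : Type} (phi : X -> Rbar) : Rbar :=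
  Rbar_glb (fun v => exists x, v = phi x).

Definition S_set {X : Type} (d : X -> X -> R) (phi : X -> Rbar) (x y : X) : Prop :=
  Rbar_le (Rbar_plus (phi y) (Finite (d y x))) (phi x).

(* Main.v *)
Require Import Defs.
From Stdlib Require Import Reals Lra Lia Classical ClassicalEpsilon.
From Coquelicot Require Import Coquelicot.

Lemma lub_correct (E : Rbar -> Prop) : Rbar_is_lub E (Rbar_lub E).
Proof. unfold Rbar_lub. exact (proj2_sig (Rbar_ex_lub E)). Qed.

Lemma glb_correct (E : Rbar -> Prop) : Rbar_is_glb E (Rbar_glb E).
Proof. unfold Rbar_glb. exact (proj2_sig (Rbar_ex_glb E)). Qed.

Lemma near_inf (A : R -> Prop) (m0 : R) :
  (exists a, A a) -> (forall a, A a -> m0 <= a) ->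
  exists g, (forall b, A b -> g <= b) /\
            (forall eps, 0 < eps -> exists a, A a /\ a < g + eps).
Proof.
  intros [a0 Ha0] Hm.
  destruct (completeness (fun x => A (- x))) as [l [Hub Hl]].
  - exists (- m0). intros x Hx. apply Hm in Hx. lra.
  - exists (- a0). rewrite Ropp_involutive. exact Ha0.
  - exists (- l). split.
    + intros b Hb. assert (b' : - b <= l). { apply Hub. rewrite Ropp_involutive; exact Hb. } lra.
    + intros eps Heps. apply NNPP. intro Hn.
      assert (l <= l - eps).
      { apply Hl. intros x Hx. apply Rnot_lt_le. intro Hlt.
        apply Hn. exists (- x). split; [exact Hx|lra]. }
      lra.
Qed.

Lemma S_fin (X : Type) (d : X -> X -> R) (phi : X -> Rbar) x y rx :
  (forall x, phi x <> m_infty) -> phi x = Finite rx -> S_set d phi x y ->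
  exists ry, phi y = Finite ry /\ ry + d y x <= rx.
Proof.
  intros Hnm Hx HS. unfold S_set in HS. rewrite Hx in HS.
  destruct (phi y) as [ry| |] eqn:E.
  - exists ry. split; [reflexivity|exact HS].
  - simpl in HS. contradiction.
  - exfalso. exact (Hnm y E).
Qed.

Theorem theorem3p5 (X : Type) (d : X -> X -> R) (phi : X -> Rbar) :
  is_quasi_metric d ->
  seq_right_K_complete d ->
  (forall x, phi x <> m_infty) ->
  proper_fun phi ->
  bounded_below phi ->
  nearly_lsc d phi ->
  (forall x, Rbar_lt (inf_image phi) (phi x) ->
     exists y, S_set d phi x y /\ Rbar_lt (phi y) (phi x)) ->
  exists z, phi z = inf_image phi.
Proof.
  intros [Hd0 [Hdxx [Htri Hsep]]] Hc Hnm [x0 Hx0] [m0 Hm0] Hlsc Hex.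
  destruct (classic (exists z, phi z = inf_image phi)) as [H|Hno]; [exact H|exfalso].
  assert (Hlt : forall x, Rbar_lt (inf_image phi) (phi x)).
  { intro x. destruct (glb_correct (fun v => exists x, v = phi x)) as [Hlb _].
    assert (Hle : Rbar_le (inf_image phi) (phi x)) by (apply Hlb; exists x; reflexivity).
    destruct (Rbar_le_lt_or_eq_dec _ _ Hle) as [H|H]; [exact H|].
    exfalso; apply Hno; exists x; symmetry; exact H. }
  assert (Hstep : forall (n : nat) (x : X), exists y, forall rx, phi x = Finite rx ->
     exists ry, phi y = Finite ry /\ ry + d y x <= rx /\ ry < rx /\
       forall y' ry', phi y' = Finite ry' -> ry' + d y' x <= rx -> ry < ry' + / (INR n + 1)).
  { intros n x. destruct (phi x) as [rx| |] eqn:Ex;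
      [| exists x; intros rx' H; discriminate H | exists x; intros rx' H; discriminate H].
    set (A := fun r => exists y, phi y = Finite r /\ r + d y x <= rx /\ r < rx).
    destruct (near_inf A m0) as [g [Hg1 Hg2]].
    - destruct (Hex x (Hlt x)) as [y [HS Hy]].
      destruct (S_fin X d phi x y rx Hnm Ex HS) as [ry [Ery Hry]].
      exists ry, y. rewrite Ex, Ery in Hy. simpl in Hy. repeat split; assumption.
    - intros a [y [Ey _]]. specialize (Hm0 y). rewrite Ey in Hm0. exact Hm0.
    - assert (Hpos : 0 < / (INR n + 1)).
      { apply Rinv_0_lt_compat. pose proof (pos_INR n). lra. }
      destruct (Hg2 _ Hpos) as [a [[y [Ey [Hy1 Hy2]]] Ha]].
      exists y. intros rx' Hrx'. injection Hrx' as <-.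
      exists a. repeat split; try assumption.
      intros y' ry' Ey' Hy'.
      destruct (Rlt_or_le ry' rx) as [Hlt'|Hge].
      + assert (A ry') by (exists y'; repeat split; assumption).
        specialize (Hg1 _ H). lra.
      + lra. }
  pose (f := fun n x => proj1_sig (constructive_indefinite_description _ (Hstep n x))).
  assert (Hf : forall n x rx, phi x = Finite rx ->
     exists ry, phi (f n x) = Finite ry /\ ry + d (f n x) x <= rx /\ ry < rx /\
       forall y' ry', phi y' = Finite ry' -> ry' + d y' x <= rx -> ry < ry' + / (INR n + 1)).
  { intros n x. exact (proj2_sig (constructive_indefinite_description _ (Hstep n x))). }
  clearbody f.
  pose (u := fix u n := match n with O => x0 | S k => f k (u k) end).
  assert (Hfin : forall n, exists r, phi (u n) = Finite r).
  { induction n as [|n [r Hr]].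
    - change (u O) with x0. destruct (phi x0) as [r| |] eqn:E; [exists r; reflexivity|contradiction|exfalso; exact (Hnm _ E)].
    - destruct (Hf n (u n) r Hr) as [ry [Ery _]]. exists ry. exact Ery. }
  pose (a := fun n => real (phi (u n))).
  assert (Ha : forall n, phi (u n) = Finite (a n)).
  { intro n. unfold a. destruct (Hfin n) as [r Hr]. rewrite Hr. reflexivity. }
  assert (F : forall n, a (S n) + d (u (S n)) (u n) <= a n /\ a (S n) < a n /\
     forall y' ry', phi y' = Finite ry' -> ry' + d y' (u n) <= a n -> a (S n) < ry' + / (INR n + 1)).
  { intro n. destruct (Hf n (u n) (a n) (Ha n)) as [ry [Ery H]].
    change (u (S n)) with (f n (u n)).
    assert (a (S n) = ry).
    { pose proof (Ha (S n)) as HH. change (u (S n)) with (f n (u n)) in HH.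
      rewrite Ery in HH. injection HH as HH. symmetry; exact HH. }
    rewrite H0. exact H. }
  assert (Hmono : forall n k, a (n + k)%nat <= a n).
  { intros n k. induction k. rewrite Nat.add_0_r. lra.
    rewrite Nat.add_succ_r. destruct (F (n + k)%nat) as [_ [H _]]. lra. }
  assert (Hsmono : forall n k, a (n + S k)%nat < a n).
  { intros n k. rewrite Nat.add_succ_r. destruct (F (n + k)%nat) as [_ [H _]].
    specialize (Hmono n k). lra. }
  assert (Hdist : forall n k, d (u (n + k)%nat) (u n) <= a n - a (n + k)%nat).
  { intros n k. induction k.
    - rewrite Nat.add_0_r, Hdxx. lra.
    - rewrite Nat.add_succ_r. destruct (F (n + k)%nat) as [H1 _].
      specialize (Htri (u (S (n + k))) (u (n + k)%nat) (u n)). lra. }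
  assert (Hlb : forall n, m0 <= a n).
  { intro n. specialize (Hm0 (u n)). rewrite Ha in Hm0. exact Hm0. }
  destruct (near_inf (fun r => exists n, r = a n) m0) as [L [HL1 HL2]].
  { exists (a O). exists O. reflexivity. }
  { intros r [n ->]. apply Hlb. }
  assert (HL1' : forall n, L <= a n) by (intro n; apply HL1; exists n; reflexivity).
  assert (HL2' : forall eps, 0 < eps -> exists N, forall n, (N <= n)%nat -> a n < L + eps).
  { intros eps Heps. destruct (HL2 eps Heps) as [r [[N ->] HN]]. exists N.
    intros n Hn. replace n with (N + (n - N))%nat by lia. specialize (Hmono N (n - N)%nat). lra. }
  assert (Hcau : right_K_Cauchy d u).
  { intros eps Heps. destruct (HL2' eps Heps) as [N HN]. exists N. intros n k Hn Hk.
    specialize (Hdist n k). specialize (HN n Hn). specialize (HL1' (n + k)%nat). lra. }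
  destruct (Hc u Hcau) as [z Hz].
  assert (Hdistinct : forall n m, n <> m -> u n <> u m).
  { intros n m Hnm' E.
    assert (Hae : a n = a m) by (unfold a; rewrite E; reflexivity).
    destruct (Nat.lt_total n m) as [H|[H|H]]; [|contradiction|].
    - specialize (Hsmono n (m - n - 1)%nat). replace (n + S (m - n - 1))%nat with m in Hsmono by lia. lra.
    - specialize (Hsmono m (n - m - 1)%nat). replace (m + S (n - m - 1))%nat with n in Hsmono by lia. lra. }
  specialize (Hlsc u z Hdistinct Hz).
  assert (Hliminf : Rbar_le (Rbar_liminf (fun n => phi (u n))) (Finite L)).
  { unfold Rbar_liminf. destruct (lub_correct (fun v => exists n, v = Rbar_glb (fun w => exists k, (n <= k)%nat /\ w = phi (u k)))) as [_ Hl].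
    apply Hl. intros v [n ->].
    destruct (glb_correct (fun w => exists k, (n <= k)%nat /\ w = phi (u k))) as [Hg _].
    assert (Hgk : forall k, (n <= k)%nat -> Rbar_le (Rbar_glb (fun w => exists k, (n <= k)%nat /\ w = phi (u k))) (Finite (a k))).
    { intros k Hk. apply Hg. exists k. split; [exact Hk|]. symmetry; apply Ha. }
    destruct (Rbar_glb (fun w => exists k, (n <= k)%nat /\ w = phi (u k))) as [g| |] eqn:Eg.
    - simpl. apply Rnot_lt_le. intro Hgt.
      destruct (HL2' (g - L)) as [N HN]; [lra|].
      specialize (HN (max n N) (Nat.le_max_r _ _)).
      specialize (Hgk (max n N) (Nat.le_max_l _ _)). simpl in Hgk. lra.
    - specialize (Hgk n (le_n n)). simpl in Hgk. contradiction.
    - simpl. exact I. }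
  pose proof (Rbar_le_trans _ _ _ Hlsc Hliminf) as HzL.
  destruct (phi z) as [c| |] eqn:Ec; [|simpl in HzL; contradiction|exfalso; exact (Hnm _ Ec)].
  simpl in HzL.
  assert (HzS : forall n, c + d z (u n) <= a n).
  { intro n. assert (d z (u n) <= a n - L); [|lra].
    apply Rnot_lt_le. intro Hgt.
    destruct (Hz (d z (u n) - (a n - L))) as [N HN]; [lra|].
    specialize (HN (n + N)%nat ltac:(lia)).
    specialize (Hdist n N). specialize (HL1' (n + N)%nat).
    specialize (Htri z (u (n + N)%nat) (u n)). lra. }
  destruct (Hex z (Hlt z)) as [w [HSw Hw]].
  destruct (S_fin X d phi z w c Hnm Ec HSw) as [rw [Ew Hrw]].
  rewrite Ew, Ec in Hw. simpl in Hw.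
  assert (Hall : forall n, L < rw + / (INR n + 1)).
  { intro n. destruct (F n) as [_ [_ H3]].
    assert (rw + d w (u n) <= a n).
    { specialize (Htri w z (u n)). specialize (HzS n). lra. }
    specialize (H3 w rw Ew H). specialize (HL1' (S n)). lra. }
  assert (L <= rw).
  { apply Rnot_lt_le. intro Hgt.
    destruct (INR_archimed (L - rw) 1) as [n Hn]; [lra|].
    specialize (Hall n).
    assert (HnP : 0 < INR n + 1) by (pose proof (pos_INR n); lra).
    assert (/ (INR n + 1) < L - rw).
    { apply (Rmult_lt_reg_l (INR n + 1)); [exact HnP|].
      rewrite Rinv_r by lra. nra. }
    lra. }
  lra.
Qed.
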